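(* Let $\Omega_n=\dfrac{\pi^{n/2}}{\Gamma\left(\frac n2+1\right)}$ for $n\in\mathbb{N}_0$. As $n\to\infty$, the following asymptotic series holds: \[ \ln\frac{\Omega_n^2}{\Omega_{n-1}\Omega_{n+1}}=\sum_{j=1}^\infty\frac{\lambda_j}{n^j},\qquad \lambda_j=(-1)^j\left\{2B_{j+1}(1)-B_{j+1}\left(\tfrac12\right)-B_{j+1}\left(\tfrac32\right)\right\}\frac{2^j}{j(j+1)}\quad(j\in\mathbb{N}), \] where $B_m(x)$ denote the Bernoulli polynomials.
   Context: $\Omega_n$ is the volume of the unit ball in $\mathbb{R}^n$; $\Gamma$ is Euler's gamma function. The Bernoulli polynomials are defined by $\frac{te^{xt}}{e^t-1}=\sum_{m\ge0}B_m(x)\frac{t^m}{m!}$. The series equality is an asymptotic expansion: for every $N$, the left side minus $\sum_{j=1}^N\lambda_jn^{-j}$ is $O(n^{-N-1})$ as $n\to\infty$. *)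

(* Defs.v *)
From Stdlib Require Import Reals List.
From Coquelicot Require Import Coquelicot.
Import ListNotations.
Open Scope R_scope.

Definition sum_range (a len : nat) (f : nat -> R) : R :=
  fold_right Rplus 0 (map f (seq a len)).

Definition Gamma (x : R) : R :=
  RInt_gen (fun t => Rpower t (x - 1) * exp (- t))
           (at_right 0) (Rbar_locally p_infty).

(* volume of the unit ball in R^n *)
Definition Omega (n : nat) : R :=
  Rpower PI (INR n / 2) / Gamma (INR n / 2 + 1).

(* Bernoulli numbers B_0, ..., B_m (convention B_1 = -1/2, i.e. t/(e^t-1)),
   via the recurrence  sum_{k=0}^{m} C(m+1,k) B_k = 0  (m >= 1). *)
Fixpoint bern_list (m : nat) : list R :=
  match m with
  | O => [1]
  | S m' =>
      let l := bern_list m' in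
      l ++ [ - / (INR m + 1) *
             sum_range 0 m (fun k => Binomial.C (m + 1)%nat k * nth k l 0) ]
  end.

Definition bernoulli_number (m : nat) : R := nth m (bern_list m) 0.

(* Bernoulli polynomial B_m(x) = sum_{k=0}^m C(m,k) B_k x^(m-k),
   equivalently t e^{xt}/(e^t-1) = sum_m B_m(x) t^m / m! *)
Definition bernoulli_poly (m : nat) (x : R) : R :=
  sum_range 0 (S m) (fun k => Binomial.C m k * bernoulli_number k * x ^ (m - k)%nat).

Definition lambda (j : nat) : R :=
  (-1) ^ j *
  (2 * bernoulli_poly (S j) 1 - bernoulli_poly (S j) (1/2)
     - bernoulli_poly (S j) (3/2))
  * 2 ^ j / (INR j * (INR j + 1)).

(* Main.v *)
Require Import Defs.
From Stdlib Require Import Reals List Lra Lia.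
From Coquelicot Require Import Coquelicot.
Import ListNotations.
Open Scope R_scope.

Fixpoint sm (n : nat) (f : nat -> R) : R :=
  match n with O => 0 | S n => sm n f + f n end.

Lemma sm_ext n f g : (forall i, (i < n)%nat -> f i = g i) -> sm n f = sm n g.
Proof. induction n; simpl; intros H; auto. rewrite IHn by (intros; apply H; lia). rewrite H by lia; auto. Qed.

Lemma sm_S n f : sm (S n) f = sm n f + f n.
Proof. reflexivity. Qed.

Lemma sm_plus n f g : sm n (fun i => f i + g i) = sm n f + sm n g.
Proof. induction n; simpl; [lra|rewrite IHn; lra]. Qed.

Lemma sm_minus n f g : sm n (fun i => f i - g i) = sm n f - sm n g.
Proof. induction n; simpl; [lra|rewrite IHn; lra]. Qed.

Lemma sm_scal n c f : sm n (fun i => c * f i) = c * sm n f.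
Proof. induction n; simpl; [lra|rewrite IHn; lra]. Qed.

Lemma sm_zero n f : (forall i, (i < n)%nat -> f i = 0) -> sm n f = 0.
Proof. induction n; simpl; intros H; auto. rewrite IHn by (intros; apply H; lia). rewrite H by lia. lra. Qed.

Lemma sm_shift n f : sm (S n) f = f O + sm n (fun i => f (S i)).
Proof. induction n; simpl in *; [lra|]. rewrite IHn. lra. Qed.

Lemma sm_split p q f : sm (p + q) f = sm p f + sm q (fun k => f (p + k)%nat).
Proof. induction q; simpl. rewrite Nat.add_0_r; lra. rewrite Nat.add_succ_r; simpl. rewrite IHq; lra. Qed.

Lemma sm_pad n m f : (n <= m)%nat -> (forall i, (n <= i < m)%nat -> f i = 0) -> sm m f = sm n f.
Proof. intros H H0. replace m with (n + (m - n))%nat by lia. rewrite sm_split.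
 rewrite (sm_zero (m-n)); [lra|]. intros; apply H0; lia. Qed.

Lemma sm_abs n f : Rabs (sm n f) <= sm n (fun i => Rabs (f i)).
Proof. induction n; simpl. rewrite Rabs_R0; lra.
 eapply Rle_trans. apply Rabs_triang. lra. Qed.

Lemma sm_le n f g : (forall i, (i < n)%nat -> f i <= g i) -> sm n f <= sm n g.
Proof. induction n; simpl; intros H; [lra|]. assert (sm n f <= sm n g) by (apply IHn; intros; apply H; lia). assert (f n <= g n) by (apply H; lia). lra. Qed.

Lemma sm_nonneg n f : (forall i, (i < n)%nat -> 0 <= f i) -> 0 <= sm n f.
Proof. intros H. rewrite <- (sm_zero n (fun _ => 0)) by auto. apply sm_le; auto. Qed.

Lemma sm_swap n m (F : nat -> nat -> R) :
  sm n (fun i => sm m (fun j => F i j)) = sm m (fun j => sm n (fun i => F i j)).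
Proof. induction n; simpl. rewrite sm_zero; auto. rewrite IHn, <- sm_plus. auto. Qed.

Lemma sm_tri K (F : nat -> nat -> R) :
  sm K (fun m => sm (S m) (fun i => F i (m - i)%nat)) = sm K (fun i => sm (K - i) (fun j => F i j)).
Proof. induction K. simpl; auto.
 rewrite (sm_ext (S K) (fun i => sm (S K - i) (fun j => F i j)) (fun i => (if Nat.eqb i K then 0 else sm (K - i) (fun j => F i j)) + F i (K - i)%nat)).
 2:{ intros i Hi. destruct (Nat.eqb_spec i K). subst. replace (S K - K)%nat with 1%nat by lia. rewrite Nat.sub_diag. simpl. lra.
     replace (S K - i)%nat with (S (K - i)) by lia. simpl; auto. }
 rewrite sm_plus. rewrite (sm_S K (fun m => _)). rewrite IHK. f_equal.
 rewrite sm_S. rewrite Nat.eqb_refl. rewrite Rplus_0_r. apply sm_ext. intros i Hi.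
 destruct (Nat.eqb_spec i K); [lia|auto]. Qed.

Lemma sm_rev n f : sm n f = sm n (fun i => f (n - S i)%nat).
Proof. induction n; auto. rewrite sm_S, (sm_shift n (fun i => f (S n - S i)%nat)). rewrite IHn.
 replace (S n - 1)%nat with n by lia.
 rewrite Rplus_comm. f_equal. Qed.

Lemma sm_single n k f : (k < n)%nat -> (forall i, (i < n)%nat -> i <> k -> f i = 0) -> sm n f = f k.
Proof. intros Hk H. replace n with (k + (S (n - S k)))%nat by lia. rewrite sm_split, sm_shift.
 rewrite sm_zero, sm_zero. rewrite Nat.add_0_r; lra. intros; apply H; lia. intros; apply H; lia. Qed.


Definition Sp K (a : nat -> R) v := sm K (fun m => a m * v ^ m).
Definition Exp (phi : R -> R) (a : nat -> R) := forall K, exists C d, 0 < d <= 1 /\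
  forall v, 0 < v <= d -> Rabs (phi v - Sp K a v) <= C * v ^ K.

Lemma pow_01 v k : 0 <= v <= 1 -> 0 <= v ^ k <= 1.
Proof. intros H; induction k; simpl; [lra|]. split. apply Rmult_le_pos; lra.
 replace 1 with (1*1) by lra. apply Rmult_le_compat; lra. Qed.

Lemma pow_anti v m n : 0 <= v <= 1 -> (m <= n)%nat -> v ^ n <= v ^ m.
Proof. intros H Hmn. replace n with (m + (n - m))%nat by lia. rewrite pow_add.
 pose proof (pow_01 v m H). pose proof (pow_01 v (n-m) H).
 replace (v^m) with (v^m*1) at 2 by lra. apply Rmult_le_compat_l; lra. Qed.

Lemma Exp_ext phi psi a b : (forall v, 0 < v -> phi v = psi v) -> (forall m, a m = b m) ->
  Exp phi a -> Exp psi b.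
Proof. intros H1 H2 H K. destruct (H K) as (C & d & Hd & HC). exists C, d; split; auto.
 intros v Hv. rewrite <- H1 by lra. unfold Sp. rewrite (sm_ext K _ (fun m => a m * v ^ m)).
 apply HC; auto. intros; rewrite H2; auto. Qed.

Lemma Exp_plus phi psi a b : Exp phi a -> Exp psi b ->
  Exp (fun v => phi v + psi v) (fun m => a m + b m).
Proof. intros H1 H2 K. destruct (H1 K) as (C1 & d1 & Hd1 & HC1).
 destruct (H2 K) as (C2 & d2 & Hd2 & HC2). exists (C1 + C2), (Rmin d1 d2).
 split. split. apply Rmin_glb_lt; lra. eapply Rle_trans. apply Rmin_l. lra.
 intros v Hv. assert (v <= d1) by (eapply Rle_trans; [apply Hv|apply Rmin_l]).
 assert (v <= d2) by (eapply Rle_trans; [apply Hv|apply Rmin_r]).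
 specialize (HC1 v ltac:(lra)). specialize (HC2 v ltac:(lra)).
 unfold Sp in *. rewrite (sm_ext K _ (fun m => a m * v ^ m + b m * v ^ m)) by (intros; ring).
 rewrite sm_plus. eapply Rle_trans. 2:{ rewrite Rmult_plus_distr_r. apply Rplus_le_compat; eauto. }
 eapply Rle_trans. 2: apply Rabs_triang. right; f_equal; ring. Qed.

Lemma Exp_scal c phi a : Exp phi a -> Exp (fun v => c * phi v) (fun m => c * a m).
Proof. intros H K. destruct (H K) as (C & d & Hd & HC). exists (Rabs c * C), d. split; auto.
 intros v Hv. unfold Sp in *. rewrite (sm_ext K _ (fun m => c * (a m * v ^ m))) by (intros; ring).
 rewrite sm_scal. rewrite <- Rmult_minus_distr_l, Rabs_mult, Rmult_assoc.
 apply Rmult_le_compat_l. apply Rabs_pos. apply HC; auto. Qed.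

Lemma Exp_minus phi psi a b : Exp phi a -> Exp psi b ->
  Exp (fun v => phi v - psi v) (fun m => a m - b m).
Proof. intros H1 H2. apply (Exp_ext (fun v => phi v + (-1) * psi v) _ (fun m => a m + (-1) * b m)).
 intros; ring. intros; ring. apply Exp_plus; auto. apply Exp_scal; auto. Qed.

Lemma Exp_0 : Exp (fun _ => 0) (fun _ => 0).
Proof. intros K. exists 0, 1. split; [lra|]. intros v Hv. unfold Sp. rewrite sm_zero by (intros; ring).
 rewrite Rminus_0_r, Rabs_R0. lra. Qed.

Lemma Exp_sum n F a : (forall j, (j < n)%nat -> Exp (F j) (a j)) ->
  Exp (fun v => sm n (fun j => F j v)) (fun m => sm n (fun j => a j m)).
Proof. induction n; intros H. apply Exp_0.
 apply (Exp_ext (fun v => sm n (fun j => F j v) + F n v) _ (fun m => sm n (fun j => a j m) + a n m)); auto.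
 apply Exp_plus. apply IHn; intros; apply H; lia. apply H; lia. Qed.

Lemma Sp_bound K a v : 0 <= v <= 1 -> Rabs (Sp K a v) <= sm K (fun m => Rabs (a m)).
Proof. intros Hv. eapply Rle_trans. apply sm_abs. apply sm_le. intros i _.
 rewrite Rabs_mult. pose proof (pow_01 v i Hv). rewrite (Rabs_pos_eq (v^i)) by lra.
 replace (Rabs (a i)) with (Rabs (a i) * 1) at 2 by lra. apply Rmult_le_compat_l. apply Rabs_pos. lra. Qed.

Lemma Exp_bounded psi b : Exp psi b -> exists B d, 0 < d <= 1 /\ forall v, 0 < v <= d -> Rabs (psi v) <= B.
Proof. intros H. destruct (H O) as (C & d & Hd & HC). exists C, d; split; auto. intros v Hv.
 specialize (HC v Hv). unfold Sp in HC. simpl in HC. rewrite Rminus_0_r, Rmult_1_r in HC. auto. Qed.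

Definition conv (a b : nat -> R) m := sm (S m) (fun i => a i * b (m - i)%nat).

Lemma Sp_conv K a b v : Sp K (conv a b) v = sm K (fun i => a i * v ^ i * Sp (K - i) b v).
Proof. unfold Sp, conv.
 rewrite (sm_ext K _ (fun m => sm (S m) (fun i => a i * v ^ i * (b (m - i)%nat * v ^ (m - i)%nat)))).
 pose proof (sm_tri K (fun i j => a i * v ^ i * (b j * v ^ j))) as T. cbv beta in T. rewrite T.
 apply sm_ext. intros i _. rewrite <- sm_scal. apply sm_ext; intros; ring.
 intros m _. rewrite Rmult_comm, <- sm_scal. apply sm_ext. intros i Hi.
 replace (v ^ m) with (v ^ i * v ^ (m - i)%nat). ring. rewrite <- pow_add. f_equal; lia. Qed.

Lemma Sp_tail0 L i b v : 0 <= v <= 1 ->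
  Rabs (Sp (L + i) b v - Sp L b v) <= v ^ L * sm (L + i) (fun m => Rabs (b m)).
Proof. intros Hv. unfold Sp. rewrite !sm_split.
 replace (sm L (fun m => b m * v ^ m) + sm i (fun k => b (L + k)%nat * v ^ (L + k)%nat) -
   sm L (fun m => b m * v ^ m)) with (sm i (fun k => b (L + k)%nat * v ^ (L + k)%nat)) by ring.
 eapply Rle_trans. apply sm_abs.
 eapply Rle_trans. apply (sm_le _ _ (fun k => v ^ L * Rabs (b (L + k)%nat))).
 intros k _. rewrite Rabs_mult, (Rmult_comm (v ^ L)). apply Rmult_le_compat_l. apply Rabs_pos.
 rewrite Rabs_pos_eq by (apply pow_le; lra). apply pow_anti; auto; lia.
 rewrite sm_scal. apply Rmult_le_compat_l. apply pow_le; lra.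
 assert (0 <= sm L (fun m => Rabs (b m))) by (apply sm_nonneg; intros; apply Rabs_pos). lra. Qed.

Lemma Sp_tail K i b v : (i <= K)%nat -> 0 <= v <= 1 ->
  Rabs (Sp K b v - Sp (K - i) b v) <= v ^ (K - i) * sm K (fun m => Rabs (b m)).
Proof. intros Hi Hv. pose proof (Sp_tail0 (K - i) i b v Hv). replace (K - i + i)%nat with K in H by lia. auto. Qed.

Lemma Sp_prod_err K a b v : 0 <= v <= 1 ->
  Rabs (Sp K a v * Sp K b v - Sp K (conv a b) v) <= v ^ K * (sm K (fun m => Rabs (a m)) * sm K (fun m => Rabs (b m))).
Proof. intros Hv. rewrite Sp_conv. unfold Sp at 1. rewrite Rmult_comm, <- sm_scal, <- sm_minus.
 eapply Rle_trans. apply sm_abs.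
 assert (R : v ^ K * (sm K (fun m => Rabs (a m)) * sm K (fun m => Rabs (b m))) =
   sm K (fun i => (v ^ K * sm K (fun m => Rabs (b m))) * Rabs (a i))).
 { rewrite sm_scal. ring. }
 rewrite R. apply sm_le. intros i Hi.
 replace (Sp K b v * (a i * v ^ i) - a i * v ^ i * Sp (K - i) b v) with (a i * v ^ i * (Sp K b v - Sp (K - i) b v)) by ring.
 rewrite !Rabs_mult. rewrite (Rabs_pos_eq (v^i)) by (apply pow_le; lra).
 replace ((v ^ K * sm K (fun m => Rabs (b m))) * Rabs (a i)) with
   (Rabs (a i) * v ^ i * (v ^ (K - i) * sm K (fun m => Rabs (b m)))).
 apply Rmult_le_compat_l. apply Rmult_le_pos. apply Rabs_pos. apply pow_le; lra.
 apply Sp_tail; auto; lia.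
 replace (v ^ K) with (v ^ i * v ^ (K - i)). ring. rewrite <- pow_add; f_equal; lia. Qed.

Lemma Exp_mult phi psi a b : Exp phi a -> Exp psi b -> Exp (fun v => phi v * psi v) (conv a b).
Proof. intros H1 H2 K. destruct (H1 K) as (C1 & d1 & Hd1 & HC1).
 destruct (H2 K) as (C2 & d2 & Hd2 & HC2). destruct (Exp_bounded _ _ H2) as (B & d3 & Hd3 & HB).
 set (A := sm K (fun m => Rabs (a m))). set (Bb := sm K (fun m => Rabs (b m))).
 assert (0 <= A) by (apply sm_nonneg; intros; apply Rabs_pos).
 assert (0 <= Bb) by (apply sm_nonneg; intros; apply Rabs_pos).
 exists (Rabs C1 * Rabs B + A * Rabs C2 + A * Bb), (Rmin d1 (Rmin d2 d3)).
 assert (Hm1 := Rmin_l d1 (Rmin d2 d3)). assert (Hm2 := Rmin_r d1 (Rmin d2 d3)).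
 assert (Hm3 := Rmin_l d2 d3). assert (Hm4 := Rmin_r d2 d3).
 split. split. apply Rmin_glb_lt; [lra|apply Rmin_glb_lt; lra]. lra.
 intros v Hv. specialize (HC1 v ltac:(lra)). specialize (HC2 v ltac:(lra)). specialize (HB v ltac:(lra)).
 assert (Hv1 : 0 <= v <= 1) by lra. pose proof (pow_01 v K Hv1).
 pose proof (Sp_prod_err K a b v Hv1). pose proof (Sp_bound K a v Hv1). fold A in H5.
 replace (phi v * psi v - Sp K (conv a b) v) with ((phi v - Sp K a v) * psi v + Sp K a v * (psi v - Sp K b v)
   + (Sp K a v * Sp K b v - Sp K (conv a b) v)) by ring.
 eapply Rle_trans. apply Rabs_triang. eapply Rle_trans. apply Rplus_le_compat_r, Rabs_triang.
 rewrite !Rabs_mult. fold A Bb in H4.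
 assert (E1 : Rabs (phi v - Sp K a v) <= Rabs C1 * v ^ K).
 { eapply Rle_trans. apply HC1. apply Rmult_le_compat_r. lra. apply RRle_abs. }
 assert (E2 : Rabs (psi v - Sp K b v) <= Rabs C2 * v ^ K).
 { eapply Rle_trans. apply HC2. apply Rmult_le_compat_r. lra. apply RRle_abs. }
 assert (E3 : Rabs (psi v) <= Rabs B) by (eapply Rle_trans; [apply HB|apply RRle_abs]).
 assert (Rabs (phi v - Sp K a v) * Rabs (psi v) <= Rabs C1 * Rabs B * v ^ K).
 { replace (Rabs C1 * Rabs B * v ^ K) with ((Rabs C1 * v ^ K) * Rabs B) by ring.
   apply Rmult_le_compat; auto; apply Rabs_pos. }
 assert (Rabs (Sp K a v) * Rabs (psi v - Sp K b v) <= A * Rabs C2 * v ^ K).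
 { rewrite Rmult_assoc. apply Rmult_le_compat; try apply Rabs_pos; auto. }
 lra. Qed.

Lemma Exp_Xpow j : Exp (fun v => v ^ j) (fun m => if Nat.eqb m j then 1 else 0).
Proof. intros K. exists 1, 1. split; [lra|]. intros v Hv. unfold Sp.
 destruct (Nat.ltb_spec j K).
 - rewrite (sm_single K j) by (auto; intros i _ Hi; rewrite (proj2 (Nat.eqb_neq i j) Hi); ring).
   rewrite Nat.eqb_refl. rewrite Rmult_1_l, Rminus_eq_0, Rabs_R0. apply Rmult_le_pos; [lra|apply pow_le; lra].
 - rewrite sm_zero. rewrite Rminus_0_r, Rmult_1_l. rewrite Rabs_pos_eq by (apply pow_le; lra).
   apply pow_anti; auto; lra. intros i Hi. rewrite (proj2 (Nat.eqb_neq i j)) by lia. ring. Qed.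

Lemma conv_delta k a m : conv (fun i => if Nat.eqb i k then 1 else 0) a m = if Nat.leb k m then a (m - k)%nat else 0.
Proof. unfold conv. destruct (Nat.leb_spec k m).
 - rewrite (sm_single (S m) k). rewrite Nat.eqb_refl; ring. lia. intros i _ Hi. rewrite (proj2 (Nat.eqb_neq i k) Hi); ring.
 - apply sm_zero. intros i Hi. rewrite (proj2 (Nat.eqb_neq i k)) by lia; ring. Qed.

Lemma Exp_geo : Exp (fun v => / (1 + v)) (fun m => (-1) ^ m).
Proof. intros K. exists 1, 1. split; [lra|]. intros v Hv.
 assert (E : / (1 + v) - Sp K (fun m => (-1) ^ m) v = (- v) ^ K / (1 + v)).
 { induction K. unfold Sp; simpl. field; lra. unfold Sp in *. rewrite sm_S.
   replace (/ (1 + v) - (sm K (fun m => (-1) ^ m * v ^ m) + (-1) ^ K * v ^ K)) with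
     ((/ (1 + v) - sm K (fun m => (-1) ^ m * v ^ m)) - (-1) ^ K * v ^ K) by ring. rewrite IHK.
   assert (H : (- v) ^ K = (-1) ^ K * v ^ K) by (rewrite <- Rpow_mult_distr; f_equal; ring).
   replace ((- v) ^ S K) with (- v * ((-1) ^ K * v ^ K)) by (simpl; rewrite H; auto).
   rewrite H. field. lra. }
 rewrite E. unfold Rdiv. rewrite Rabs_mult, <- RPow_abs, Rabs_Ropp, Rabs_pos_eq by lra.
 rewrite Rabs_pos_eq by (apply Rlt_le, Rinv_0_lt_compat; lra).
 rewrite Rmult_1_l. rewrite <- (Rmult_1_r (v^K)) at 2. apply Rmult_le_compat_l. apply pow_le; lra.
 rewrite <- Rinv_1. apply Rinv_le_contravar; lra. Qed.

Lemma Exp_zero phi a K : Exp phi a -> (forall m, (m < K)%nat -> a m = 0) ->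
  exists C d, 0 < d <= 1 /\ forall v, 0 < v <= d -> Rabs (phi v) <= C * v ^ K.
Proof. intros H H0. destruct (H K) as (C & d & Hd & HC). exists C, d; split; auto. intros v Hv.
 specialize (HC v Hv). unfold Sp in HC. rewrite sm_zero in HC. rewrite Rminus_0_r in HC; auto.
 intros i Hi; rewrite H0; auto; ring. Qed.

Definition lnc (c : R) (m : nat) : R := if Nat.eqb m 0 then 0 else (-1) ^ (S m) * c ^ m / INR m.

Lemma lnc_deriv c k v : 0 < 1 + c * v ->
  is_derive (fun v => ln (1 + c * v) - Sp (S k) (lnc c) v) v (c ^ (S k) * (-1) ^ k * v ^ k / (1 + c * v)).
Proof. intros Hv. induction k.
 - unfold Sp; simpl. unfold lnc; simpl. auto_derive. lra. field. lra.
 - unfold Sp in *. 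
   apply (is_derive_ext (fun v => (ln (1 + c * v) - sm (S k) (fun m => lnc c m * v ^ m)) - lnc c (S k) * v ^ (S k))).
   intros t. change (ln (1 + c * t) - sm (S k) (fun m => lnc c m * t ^ m) - lnc c (S k) * t ^ S k = ln (1 + c * t) - (sm (S k) (fun m => lnc c m * t ^ m) + lnc c (S k) * t ^ S k)). ring.
   replace (c ^ S (S k) * (-1) ^ S k * v ^ S k / (1 + c * v)) with
     (c ^ S k * (-1) ^ k * v ^ k / (1 + c * v) - lnc c (S k) * (INR (S k) * 1 * v ^ Init.Nat.pred (S k))).
   apply (is_derive_minus _ (fun v => lnc c (S k) * v ^ S k)). auto.
   auto_derive. auto. simpl. ring.
   unfold lnc. simpl Nat.eqb. cbv iota. 
   assert (INR (S k) <> 0) by (apply not_0_INR; lia). simpl. field. repeat split; try lra; auto. Qed.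

Lemma Sp_lnc_0 c K : Sp K (lnc c) 0 = 0.
Proof. unfold Sp. apply sm_zero. intros i _. destruct i. unfold lnc; simpl; ring. simpl; ring. Qed.

Lemma lnc_bound c k v : 0 < c -> 0 <= v ->
  Rabs (ln (1 + c * v) - Sp (S k) (lnc c) v) <= c ^ S k * v ^ S k.
Proof. intros Hc Hv. destruct (Req_dec v 0) as [->|Hv0].
 rewrite Rmult_0_r, Rplus_0_r, ln_1, Sp_lnc_0. rewrite pow_i by lia. rewrite Rminus_0_r, Rabs_R0. lra.
 assert (Hv' : 0 < v) by lra.
 destruct (MVT_gen (fun v => ln (1 + c * v) - Sp (S k) (lnc c) v) 0 v
   (fun t => c ^ (S k) * (-1) ^ k * t ^ k / (1 + c * t))) as (z & Hz & E).
 - intros x Hx. rewrite Rmin_left in Hx by lra. apply lnc_deriv. nra.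
 - intros x Hx. rewrite Rmin_left, Rmax_right in Hx by lra. apply continuity_pt_filterlim.
   apply (ex_derive_continuous (fun v => ln (1 + c * v) - Sp (S k) (lnc c) v)).
   eexists. apply lnc_deriv. nra.
 - rewrite Rmin_left, Rmax_right in Hz by lra. replace (v - 0) with v in E by ring.
   rewrite Rmult_0_r, Rplus_0_r, ln_1, Sp_lnc_0, Rminus_0_r, Rminus_0_r in E.
   rewrite E. unfold Rdiv. rewrite !Rabs_mult. rewrite <- !RPow_abs.
   rewrite Rabs_m1, pow1, Rabs_pos_eq, Rabs_pos_eq, Rabs_pos_eq, Rabs_pos_eq by (try apply Rlt_le, Rinv_0_lt_compat; nra).
   assert (0 <= z ^ k <= v ^ k). split. apply pow_le; lra. apply pow_incr; lra.
   assert (/ (1 + c * z) <= 1). rewrite <- Rinv_1. apply Rinv_le_contravar; nra.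
   assert (0 < / (1 + c * z)) by (apply Rinv_0_lt_compat; nra).
   assert (0 < c ^ S k) by (apply pow_lt; lra).
   replace (c ^ S k * v ^ S k) with (c ^ S k * 1 * v ^ k * 1 * v) by (simpl; ring).
   apply Rmult_le_compat_r; [lra|]. apply Rmult_le_compat; try nra. Qed.

Lemma Exp_ln c : 0 < c -> Exp (fun v => ln (1 + c * v)) (lnc c).
Proof. intros Hc K. destruct K.
 - exists c, 1. split; [lra|]. intros v Hv. pose proof (lnc_bound c 0 v Hc ltac:(lra)).
   replace (Sp 0 (lnc c) v) with (Sp 1 (lnc c) v) by (unfold Sp, lnc; simpl; ring). simpl in *. nra.
 - exists (c ^ S K), 1. split; [lra|]. intros v Hv. apply lnc_bound; lra. Qed.

Lemma hockey (j m : nat) : sm (S m) (fun i => Binomial.C (i + j)%nat i) = Binomial.C (m + S j)%nat m.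
Proof. induction m. simpl. rewrite !C_n_0; lra.
 rewrite sm_S, IHm. replace (S m + j)%nat with (m + S j)%nat by lia.
 rewrite pascal by lia. f_equal. Qed.

Lemma Exp_invpow j : Exp (fun v => (/ (1 + v)) ^ (S j)) (fun m => (-1) ^ m * Binomial.C (m + j)%nat m).
Proof. induction j.
 - apply (Exp_ext (fun v => / (1 + v)) _ (fun m => (-1) ^ m) _ (fun v _ => eq_sym (pow_1 (/ (1 + v))))). intros m. rewrite Nat.add_0_r, C_n_n; ring.
   apply Exp_geo.
 - apply (Exp_ext (fun v => (/ (1 + v)) ^ (S j) * / (1 + v)) _ (conv (fun m => (-1) ^ m * Binomial.C (m + j)%nat m) (fun m => (-1) ^ m))).
   intros v _. simpl; ring.
   intros m. unfold conv. rewrite (sm_ext _ _ (fun i => (-1) ^ m * Binomial.C (i + j)%nat i)).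
   rewrite sm_scal, hockey. reflexivity.
   intros i Hi. replace ((-1) ^ m) with ((-1) ^ i * (-1) ^ (m - i)%nat). ring.
   rewrite <- pow_add. f_equal. lia.
   apply Exp_mult; auto. apply Exp_geo. Qed.

Lemma sum_range_sm a len f : sum_range a len f = sm len (fun i => f (a + i)%nat).
Proof. revert a; induction len; intros a. reflexivity.
 transitivity (f a + sum_range (S a) len f). reflexivity. rewrite IHlen, (sm_shift len). rewrite Nat.add_0_r. f_equal.
 apply sm_ext; intros. f_equal; lia. Qed.

Lemma sumf_sm f n : sum_f_R0 f n = sm (S n) f.
Proof. induction n; simpl. lra. rewrite IHn. simpl; lra. Qed.

Lemma bern_len m : length (bern_list m) = S m.
Proof. induction m; simpl; auto. rewrite length_app; simpl. rewrite IHm. lia. Qed.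

Lemma bern_nth m k : (k <= m)%nat -> nth k (bern_list m) 0 = bernoulli_number k.
Proof. intros H. induction H. reflexivity. simpl. rewrite app_nth1. auto. rewrite bern_len; lia. Qed.

Notation Bn := bernoulli_number.
Notation Bpp := bernoulli_poly.

Lemma B_rec m : (1 <= m)%nat -> Bn m = - / (INR m + 1) * sm m (fun k => Binomial.C (m + 1) k * Bn k).
Proof. intros H. destruct m. lia. unfold Bn at 1. simpl bern_list. rewrite app_nth2 by (rewrite bern_len; lia).
 rewrite bern_len, Nat.sub_diag. simpl nth. rewrite sum_range_sm. f_equal. apply sm_ext. intros i Hi.
 simpl. rewrite bern_nth by lia. auto. Qed.

Lemma C_Sn_n n : Binomial.C (S n) n = INR (S n).
Proof. unfold Binomial.C. replace (S n - n)%nat with 1%nat by lia. simpl (Factorial.fact 1).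
 rewrite fact_simpl, mult_INR. simpl (INR 1). field. apply INR_fact_neq_0. Qed.

Lemma B_rec0 m : (1 <= m)%nat -> sm (S m) (fun k => Binomial.C (S m) k * Bn k) = 0.
Proof. intros H. rewrite sm_S, C_Sn_n. rewrite (B_rec m H). replace (m + 1)%nat with (S m) by lia.
 rewrite S_INR. field. pose proof (pos_INR m). lra. Qed.

Lemma B0 : Bn 0 = 1.
Proof. reflexivity. Qed.

Lemma B1 : Bn 1 = - / 2.
Proof. rewrite B_rec by lia. simpl sm. rewrite B0. unfold Binomial.C. simpl. field. Qed.

Lemma Bp_sm m x : Bpp m x = sm (S m) (fun k => Binomial.C m k * Bn k * x ^ (m - k)).
Proof. unfold bernoulli_poly. rewrite sum_range_sm. apply sm_ext; intros; auto. Qed.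

Lemma C_prod M k l : (k + l <= M)%nat ->
  Binomial.C M k * Binomial.C (M - k) l = Binomial.C M (M - l) * Binomial.C (M - l) k.
Proof. intros H. unfold Binomial.C. replace (M - (M - l))%nat with l by lia.
 replace (M - k - l)%nat with (M - l - k)%nat by lia.
 pose proof (INR_fact_neq_0 k). pose proof (INR_fact_neq_0 l). pose proof (INR_fact_neq_0 (M - k)).
 pose proof (INR_fact_neq_0 (M - l)). pose proof (INR_fact_neq_0 (M - l - k)). field. tauto. Qed.

Lemma sm_tri_swap M (F : nat -> nat -> R) :
  sm (S M) (fun k => sm (S (M - k)) (fun l => F k l)) = sm (S M) (fun l => sm (S (M - l)) (fun k => F k l)).
Proof.
 pose proof (sm_tri (S M) F) as T1. pose proof (sm_tri (S M) (fun a b => F b a)) as T2. cbv beta in T1, T2.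
 rewrite (sm_ext (S M) (fun k => sm (S (M - k)) (fun l => F k l)) (fun i => sm (S M - i) (fun j => F i j))).
 rewrite <- T1. rewrite (sm_ext (S M) (fun l => sm (S (M - l)) (fun k => F k l)) (fun i => sm (S M - i) (fun j => F j i))).
 rewrite <- T2. apply sm_ext. intros m Hm. rewrite sm_rev. apply sm_ext. intros i Hi. f_equal; lia.
 intros; f_equal; lia. intros; f_equal; lia. Qed.

Lemma Bp_trans M x h : Bpp M (x + h) = sm (S M) (fun i => Binomial.C M i * Bpp i x * h ^ (M - i)).
Proof. rewrite Bp_sm.
 rewrite (sm_ext (S M) _ (fun k => sm (S (M - k)) (fun l => Binomial.C M k * Bn k * Binomial.C (M - k) l * h ^ l * x ^ (M - k - l)))).
 2:{ intros k Hk. rewrite Rplus_comm, binomial, sumf_sm, <- sm_scal. apply sm_ext; intros; ring. }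
 rewrite sm_tri_swap. rewrite sm_rev. apply sm_ext. intros l Hl. replace (S M - S l)%nat with (M - l)%nat by lia.
 rewrite Bp_sm. rewrite Rmult_comm, <- Rmult_assoc, (Rmult_comm (h ^ _)), <- sm_scal.
 try replace (M - (M - l))%nat with l by lia. apply sm_ext. intros k Hk.
 assert (Hc := C_prod M k (M - l) ltac:(lia)). replace (M - (M - l))%nat with l in Hc by lia.
 replace (M - k - (M - l))%nat with (l - k)%nat by lia.
 transitivity ((Binomial.C M k * Binomial.C (M - k) (M - l)) * Bn k * h ^ (M - l) * x ^ (l - k)). ring.
 rewrite Hc. ring. Qed.

Lemma Bp_at1 i : Bpp i 1 = Bn i + (if Nat.eqb i 1 then 1 else 0).
Proof. destruct i as [|[|i]].
 - rewrite Bp_sm. simpl. unfold Binomial.C; simpl. rewrite B0. field.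
 - rewrite Bp_sm. simpl. unfold Binomial.C; simpl. rewrite B0, B1. field.
 - rewrite Bp_sm, sm_S. rewrite (sm_ext _ _ (fun k => Binomial.C (S (S i)) k * Bn k)).
   rewrite B_rec0 by lia. rewrite C_n_n, Nat.sub_diag. simpl. ring.
   intros; rewrite pow1; ring. Qed.

Lemma C_n_1 n : Binomial.C (S n) 1 = INR (S n).
Proof. unfold Binomial.C. replace (S n - 1)%nat with n by lia. simpl (Factorial.fact 1).
 rewrite fact_simpl, mult_INR. simpl (INR 1). field. apply INR_fact_neq_0. Qed.

Lemma Bp_diff M x : (1 <= M)%nat -> Bpp M (x + 1) = Bpp M x + INR M * x ^ (M - 1).
Proof. intros HM. rewrite Rplus_comm, Bp_trans.
 rewrite (sm_ext _ _ (fun i => Binomial.C M i * Bn i * x ^ (M - i) + Binomial.C M i * (if Nat.eqb i 1 then 1 else 0) * x ^ (M - i))).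
 2:{ intros i _. rewrite Bp_at1. ring. }
 rewrite sm_plus, <- Bp_sm. f_equal. rewrite (sm_single _ 1). simpl Nat.eqb. destruct M. lia. rewrite C_n_1. ring.
 lia. intros i _ Hi. rewrite (proj2 (Nat.eqb_neq i 1) Hi). ring. Qed.

Definition Acomb i := 2 * Bpp i 1 - Bpp i (1/2) - Bpp i (3/2).

Lemma Acomb0 : Acomb 0 = 0.
Proof. unfold Acomb. rewrite !Bp_sm. simpl. ring. Qed.

Lemma Acomb1 : Acomb 1 = 0.
Proof. unfold Acomb. rewrite !Bp_sm. simpl. unfold Binomial.C; simpl. rewrite B0, B1. field. Qed.

Lemma As_val M : sm (S M) (fun i => Binomial.C M i * Acomb i * (1/2) ^ (M - i)) =
  2 * Bpp M (3/2) - Bpp M 1 - Bpp M 2.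
Proof.
 assert (E1 : Bpp M (3/2) = sm (S M) (fun i => Binomial.C M i * Bpp i 1 * (1/2) ^ (M - i))).
 { replace (3/2) with (1 + 1/2) by field. apply Bp_trans. }
 assert (E2 : Bpp M 1 = sm (S M) (fun i => Binomial.C M i * Bpp i (1/2) * (1/2) ^ (M - i))).
 { replace 1 with (1/2 + 1/2) at 1 by field. apply Bp_trans. }
 assert (E3 : Bpp M 2 = sm (S M) (fun i => Binomial.C M i * Bpp i (3/2) * (1/2) ^ (M - i))).
 { replace 2 with (3/2 + 1/2) at 1 by field. apply Bp_trans. }
 rewrite E1, E2, E3. rewrite <- !sm_scal, <- !sm_minus. apply sm_ext. intros i _. unfold Acomb. ring. Qed.

Lemma lambda_A j : lambda j = (-1) ^ j * Acomb (S j) * 2 ^ j / (INR j * (INR j + 1)).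
Proof. reflexivity. Qed.

Lemma term_eq p j : (j <= p)%nat ->
  lambda (S j) * ((-1) ^ (p - j) * Binomial.C (p - j + j) (p - j)) =
  (-1) ^ (S p) * 2 ^ (S p) / (INR (S p) * INR (S (S p))) *
  (Binomial.C (S (S p)) (S (S j)) * Acomb (S (S j)) * (1/2) ^ (p - j)).
Proof. intros H. rewrite lambda_A. remember (p - j)%nat as q. replace p with (j + q)%nat by lia.
 replace (S (S (j + q)) - S (S j))%nat with q by lia.
 unfold Binomial.C. replace (q + j - q)%nat with j by lia. replace (S (S (j + q)) - S (S j))%nat with q by lia. replace (q + j)%nat with (j + q)%nat by lia.
 rewrite !fact_simpl. rewrite !mult_INR.
 replace ((-1) ^ S (j + q)) with ((-1) ^ S j * (-1) ^ q) by (rewrite <- pow_add; f_equal).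
 replace (2 ^ S (j + q)) with (2 ^ S j * 2 ^ q) by (rewrite <- pow_add; f_equal).
 assert (E : 2 ^ q * (1/2) ^ q = 1) by (rewrite <- Rpow_mult_distr; replace (2 * (1/2)) with 1 by field; apply pow1).
 pose proof (INR_fact_neq_0 j). pose proof (INR_fact_neq_0 q). pose proof (INR_fact_neq_0 (j + q)).
 rewrite !S_INR. pose proof (pos_INR j). pose proof (pos_INR (j + q)).
 rewrite plus_INR in *.
 assert (E' : (1/2) ^ q = / 2 ^ q).
 { assert (2 ^ q <> 0) by (apply pow_nonzero; lra).
   apply Rmult_eq_reg_l with (2 ^ q); auto. rewrite E. field; auto. }
 rewrite E'. assert (2 ^ q <> 0) by (apply pow_nonzero; lra).
 field. repeat split; try lra; auto. Qed.

Lemma coef_id p : lambda (S p) + sm (S p) (fun j => lambda (S j) * ((-1) ^ (p - j) * Binomial.C (p - j + j) (p - j)))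
  = (-1) ^ (S (S p)) * (2 ^ (S p) - 1) / INR (S p).
Proof.
 set (K := (-1) ^ (S p) * 2 ^ (S p) / (INR (S p) * INR (S (S p)))).
 rewrite (sm_ext _ _ (fun j => K * (Binomial.C (S (S p)) (S (S j)) * Acomb (S (S j)) * (1/2) ^ (S (S p) - S (S j))))).
 2:{ intros j Hj. rewrite term_eq by lia. reflexivity. }
 rewrite sm_scal.
 pose proof (As_val (S (S p))) as HA. rewrite sm_shift, sm_shift in HA. rewrite Acomb0, Acomb1 in HA.
 assert (HS : sm (S p) (fun j => Binomial.C (S (S p)) (S (S j)) * Acomb (S (S j)) * (1 / 2) ^ (S (S p) - S (S j)))
    = 2 * Bpp (S (S p)) (3 / 2) - Bpp (S (S p)) 1 - Bpp (S (S p)) 2) by (rewrite <- HA; ring).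
 rewrite HS. rewrite lambda_A.
 pose proof (Bp_diff (S (S p)) (1/2) ltac:(lia)) as D1. pose proof (Bp_diff (S (S p)) 1 ltac:(lia)) as D2.
 replace (1/2 + 1) with (3/2) in D1 by field. replace (1 + 1) with 2 in D2 by field.
 unfold Acomb. rewrite D1, D2. rewrite pow1. simpl (S (S p) - 1)%nat. unfold K.
 assert (E : 2 ^ S p * (1/2) ^ S p = 1) by (rewrite <- Rpow_mult_distr; replace (2 * (1/2)) with 1 by field; apply pow1).
 rewrite !S_INR. pose proof (pos_INR p).
 replace ((-1) ^ S (S p)) with (- (-1) ^ S p) by (simpl; ring).
 transitivity ((-1) ^ S p * (2 ^ S p * (1/2) ^ S p) / (INR p + 1) - (-1) ^ S p * 2 ^ S p / (INR p + 1)).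
 field. lra. rewrite E. field. lra. Qed.

Definition dl (k m : nat) : R := if Nat.eqb m k then 1 else 0.
Definition rj (j p : nat) : R := (-1) ^ p * Binomial.C (p + j)%nat p.

Definition phiN N v := sm N (fun j => lambda (S j) * (v ^ (S j) + v ^ (S j) * (/ (1 + v)) ^ (S j)))
  - (ln (1 + 2 * v) - ln (1 + 1 * v)).
Definition aN N m := sm N (fun j => lambda (S j) * (dl (S j) m + conv (dl (S j)) (rj j) m)) - (lnc 2 m - lnc 1 m).

Lemma Exp_phiN N : Exp (phiN N) (aN N).
Proof. apply Exp_minus. apply Exp_sum. intros j _. apply Exp_scal. apply Exp_plus.
 apply Exp_Xpow. apply Exp_mult. apply Exp_Xpow. apply Exp_invpow.
 apply Exp_minus; apply Exp_ln; lra. Qed.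

Lemma aN_zero N m : (m <= N)%nat -> aN N m = 0.
Proof. intros H. unfold aN. destruct m as [|p].
 - rewrite sm_zero. unfold lnc; simpl; ring. intros j _. unfold dl. rewrite conv_delta. simpl. ring.
 - rewrite (sm_ext _ _ (fun j => lambda (S j) * dl (S j) (S p) + (if Nat.leb (S j) (S p) then lambda (S j) * rj j (S p - S j) else 0))).
   2:{ intros j _. unfold dl at 2. rewrite conv_delta. destruct (Nat.leb (S j) (S p)); ring. }
   rewrite sm_plus. rewrite (sm_single N p). 2: lia.
   2:{ intros i _ Hi. unfold dl. rewrite (proj2 (Nat.eqb_neq (S p) (S i))) by lia. ring. }
   rewrite (sm_pad (S p) N) by (try lia; intros i Hi; rewrite (proj2 (Nat.leb_gt (S i) (S p))) by lia; auto).
   rewrite (sm_ext (S p) _ (fun j => lambda (S j) * ((-1) ^ (p - j) * Binomial.C (p - j + j) (p - j)))).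
   2:{ intros j Hj. rewrite (proj2 (Nat.leb_le (S j) (S p))) by lia. unfold rj. simpl (S p - S j)%nat. reflexivity. }
   unfold dl. rewrite Nat.eqb_refl. rewrite Rmult_1_r. rewrite coef_id.
   unfold lnc. simpl Nat.eqb. cbv iota. rewrite pow1. field. apply not_0_INR. lia. Qed.

Lemma T_sm N n : sum_range 1 N (fun j => lambda j / INR n ^ j) = sm N (fun i => lambda (S i) / INR n ^ (S i)).
Proof. rewrite sum_range_sm. apply sm_ext. intros; reflexivity. Qed.

Lemma shift_bound N : exists C M, (1 <= M)%nat /\ forall n, (M <= n)%nat ->
  Rabs (sum_range 1 N (fun j => lambda j / INR n ^ j) + sum_range 1 N (fun j => lambda j / INR (S n) ^ j)
        - (ln (INR n + 2) - ln (INR n + 1))) <= C / INR n ^ (S N).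
Proof. destruct (Exp_zero _ _ (S N) (Exp_phiN N) (fun m Hm => aN_zero N m ltac:(lia))) as (C & d & Hd & HC).
 destruct (archimed_cor1 d ltac:(lra)) as (M & HM2 & HM1).
 exists C, M. split. lia. intros n Hn.
 assert (Hn0 : 0 < INR n) by (apply lt_0_INR; lia).
 assert (HMn : INR M <= INR n) by (apply le_INR; lia).
 assert (HM0 : 0 < INR M) by (apply lt_0_INR; lia).
 set (v := / INR n).
 assert (Hv : 0 < v <= d). { split. apply Rinv_0_lt_compat; auto. apply Rlt_le. eapply Rle_lt_trans; [|apply HM2].
   apply Rinv_le_contravar; auto. }
 specialize (HC v Hv).
 replace (C * v ^ S N) with (C / INR n ^ S N) in HC by (unfold v; rewrite pow_inv; field; apply pow_nonzero; lra).
 replace (phiN N v) with (sum_range 1 N (fun j => lambda j / INR n ^ j) + sum_range 1 N (fun j => lambda j / INR (S n) ^ j)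
        - (ln (INR n + 2) - ln (INR n + 1))) in HC; auto.
 unfold phiN. rewrite !T_sm, <- sm_plus. f_equal. apply sm_ext. intros i _.
 unfold v. rewrite S_INR. rewrite <- Rpow_mult_distr, !pow_inv.
 replace (/ INR n * / (1 + / INR n)) with (/ (INR n + 1)) by (field; lra). rewrite pow_inv. field. split; apply pow_nonzero; lra.
 unfold v. replace (1 + 2 * / INR n) with ((INR n + 2) / INR n) by (field; lra).
 replace (1 + 1 * / INR n) with ((INR n + 1) / INR n) by (field; lra).
 rewrite !ln_div by lra. ring. Qed.

Definition g (x t : R) : R := Rpower t (x - 1) * exp (- t).
Definition F2 := filter_prod (at_right 0) (Rbar_locally p_infty).

Lemma ln_le_sub1 u : 0 < u -> ln u <= u - 1.
Proof. intros Hu. pose proof (exp_ineq1_le (ln u)). rewrite exp_ln in H; lra. Qed.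

Lemma pe_derive y t : 0 < t ->
  is_derive (fun u => Rpower u y * exp (- u)) t (y * Rpower t (y - 1) * exp (- t) - Rpower t y * exp (- t)).
Proof. intros Ht. replace (y * Rpower t (y - 1) * exp (- t) - Rpower t y * exp (- t)) with
   ((y * Rpower t (y - 1)) * exp (- t) + Rpower t y * (- exp (- t))) by ring.
 apply (is_derive_mult (fun u => Rpower u y) (fun u => exp (- u))).
 apply is_derive_Reals. apply derivable_pt_lim_power; auto.
 auto_derive; auto. ring. intros; apply Rmult_comm. Qed.

Lemma pe_cont y t : 0 < t -> continuous (fun u => Rpower u y * exp (- u)) t.
Proof. intros Ht. assert (H : ex_derive (fun u => Rpower u y * exp (- u)) t) by (eexists; apply pe_derive; auto).
 exact (ex_derive_continuous _ _ H). Qed.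

Lemma g_cont x t : 0 < t -> continuous (g x) t.
Proof. intros; unfold g; apply pe_cont; auto. Qed.

Lemma pe_pos y t : 0 < t -> 0 < Rpower t y * exp (- t).
Proof. intros; unfold Rpower. apply Rmult_lt_0_compat; apply exp_pos. Qed.

Lemma g_pos x t : 0 < t -> 0 < g x t.
Proof. apply pe_pos. Qed.

Lemma exp_le' x y : x <= y -> exp x <= exp y.
Proof. intros [H|H]. left; apply exp_increasing; auto. subst; lra. Qed.

Lemma ln_le' x y : 0 < x -> x <= y -> ln x <= ln y.
Proof. intros H [H1|H1]. left; apply ln_increasing; auto. subst; lra. Qed.

Lemma g_le1 x t : 1 <= x -> 0 < t <= 1 -> g x t <= 1.
Proof. intros Hx Ht. unfold g, Rpower. rewrite <- exp_plus. apply Rle_trans with (exp 0); [apply exp_le'|rewrite exp_0; lra].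
 assert (ln t <= 0) by (rewrite <- ln_1; apply ln_le'; lra). assert (0 <= (x - 1) * - ln t) by (apply Rmult_le_pos; lra). lra. Qed.

Lemma pe_bound y : 0 <= y -> exists D, 0 < D /\ forall t, 1 <= t -> Rpower t y * exp (- t) <= D / t ^ 2.
Proof. intros Hy. set (m := y + 2). exists (exp (m * ln m - m)). split. apply exp_pos. intros t Ht.
 assert (Hm : 0 < m) by (unfold m; lra).
 replace (exp (m * ln m - m) / t ^ 2) with (exp (m * ln m - m - 2 * ln t)).
 unfold Rpower. rewrite <- exp_plus. apply exp_le'.
 assert (ln (t / m) <= t / m - 1) by (apply ln_le_sub1; apply Rdiv_lt_0_compat; lra).
 rewrite ln_div in H by lra. assert (m * (ln t - ln m) <= m * (t / m - 1)) by (apply Rmult_le_compat_l; lra).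
 replace (m * (t / m - 1)) with (t - m) in H0 by (field; lra). unfold m in *. nra.
 replace (m * ln m - m - 2 * ln t) with ((m * ln m - m) + - (2 * ln t)) by ring.
 rewrite exp_plus, exp_Ropp. unfold Rdiv. f_equal.
 replace (2 * ln t) with (ln (t ^ 2)). rewrite exp_ln. auto. apply pow_lt; lra.
 rewrite ln_pow by lra. simpl; ring. Qed.

Lemma ball_R x e y : ball x e y <-> Rabs (y - x) < e.
Proof. split; intros H; exact H. Qed.

Lemma at_right_lt d : 0 < d -> at_right 0 (fun a => a < d).
Proof. intros Hd. exists (mkposreal d Hd). intros y Hy Hy0. assert (H : Rabs (y - 0) < d) by exact Hy.
 rewrite Rminus_0_r, Rabs_pos_eq in H by lra. auto. Qed.

Lemma at_right_pos : at_right 0 (fun a => 0 < a).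
Proof. exists (mkposreal 1 Rlt_0_1). intros; auto. Qed.

Lemma pinf_gt B : Rbar_locally p_infty (fun b => B < b).
Proof. exists B. auto. Qed.

Lemma ex_RInt_g x a b : 0 < a -> 0 < b -> ex_RInt (g x) a b.
Proof. intros Ha Hb. apply (@ex_RInt_continuous R_CompleteNormedModule). intros z Hz. apply g_cont.
 assert (0 < Rmin a b) by (apply Rmin_glb_lt; auto). lra. Qed.

Lemma RInt_g_small x a a' : 1 <= x -> 0 < a <= 1 -> 0 < a' <= 1 -> Rabs (RInt (g x) a a') <= Rabs (a' - a).
Proof. intros Hx Ha Ha'. destruct (Rle_or_lt a a').
 - eapply Rle_trans. apply (abs_RInt_le_const _ _ _ 1); auto. apply ex_RInt_g; lra.
   intros t Ht. pose proof (g_pos x t ltac:(lra)). rewrite Rabs_pos_eq by lra. apply g_le1; lra.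
   rewrite Rabs_pos_eq; lra.
 - rewrite <- opp_RInt_swap by (apply ex_RInt_g; lra). change (Rabs (- RInt (g x) a' a) <= Rabs (a' - a)).
   rewrite Rabs_Ropp. eapply Rle_trans. apply (abs_RInt_le_const _ _ _ 1); [lra| |].
   apply ex_RInt_g; lra.
   intros t Ht. pose proof (g_pos x t ltac:(lra)). rewrite Rabs_pos_eq by lra. apply g_le1; lra.
   rewrite Rabs_left; lra. Qed.

Lemma RInt_inv2 D b b' : 0 < b -> 0 < b' -> RInt (fun t => D / t ^ 2) b b' = D / b - D / b'.
Proof. intros Hb Hb'. apply is_RInt_unique.
 replace (D / b - D / b') with (minus ((fun t => - D / t) b') ((fun t => - D / t) b)).
 apply (@is_RInt_derive R_CompleteNormedModule (fun t => - D / t)).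
 - intros t Ht. assert (0 < Rmin b b') by (apply Rmin_glb_lt; auto). auto_derive. lra. field. lra.
 - intros t Ht. assert (0 < Rmin b b') by (apply Rmin_glb_lt; auto).
   apply (ex_derive_continuous (fun t => D / t ^ 2)). auto_derive. assert (0 < t) by lra. apply Rgt_not_eq; nra.
 - unfold minus, plus, opp; simpl. field; lra. Qed.

Lemma RInt_g_tail x D b b' : (forall t, 1 <= t -> g x t <= D / t ^ 2) -> 1 <= b <= b' ->
  0 <= RInt (g x) b b' <= D / b - D / b'.
Proof. intros HD Hb. split.
 apply RInt_ge_0. lra. apply ex_RInt_g; lra. intros t Ht; apply Rlt_le, g_pos; lra.
 rewrite <- RInt_inv2 by lra. apply RInt_le. lra. apply ex_RInt_g; lra.
 apply (@ex_RInt_continuous R_CompleteNormedModule). intros z Hz. rewrite Rmin_left, Rmax_right in Hz by lra.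
 apply (ex_derive_continuous (fun t => D / t ^ 2)). auto_derive. apply Rgt_not_eq; nra.
 intros t Ht. apply HD. lra. Qed.

Lemma F2_proper : ProperFilter F2.
Proof. apply filter_prod_proper. Qed.

Lemma Gamma_g x : Gamma x = RInt_gen (g x) (at_right 0) (Rbar_locally p_infty).
Proof. reflexivity. Qed.

Lemma Gamma_lim x : 1 <= x ->
  filterlim (fun ab => RInt (g x) (fst ab) (snd ab)) F2 (locally (Gamma x)) /\
  is_RInt_gen (g x) (at_right 0) (Rbar_locally p_infty) (Gamma x).
Proof. intros Hx. destruct (pe_bound (x - 1) ltac:(lra)) as (D & HD0 & HD).
 assert (Hc : exists l, filterlim (fun ab => RInt (g x) (fst ab) (snd ab)) F2 (locally l)).
 { apply (proj1 (@filterlim_locally_cauchy _ _ F2 F2_proper (fun ab => RInt (g x) (fst ab) (snd ab)))).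
   intros eps. set (d := Rmin 1 (eps / 2)). set (B := Rmax 1 (2 * D / eps)).
   pose proof (cond_pos eps) as He.
   assert (Hd : 0 < d <= 1 /\ d <= eps / 2). { unfold d; split. split. apply Rmin_glb_lt; lra. apply Rmin_l. apply Rmin_r. }
   assert (HB : 1 <= B /\ 2 * D / eps <= B) by (unfold B; split; [apply Rmax_l|apply Rmax_r]).
   exists (fun ab => (0 < fst ab /\ fst ab < d) /\ B < snd ab). split.
   - apply Filter_prod with (fun a => 0 < a /\ a < d) (fun b => B < b).
     apply filter_and. apply at_right_pos. apply at_right_lt; lra. apply pinf_gt. intros; simpl; auto.
   - intros [a b] [a' b'] [Ha Hb] [Ha' Hb']. simpl in *. apply ball_R.
     assert (E : RInt (g x) a' b' = RInt (g x) a' a + RInt (g x) a b + RInt (g x) b b').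
     { rewrite <- (RInt_Chasles (g x) a' b b'), <- (RInt_Chasles (g x) a' a b); try apply ex_RInt_g; try lra. reflexivity. }
     rewrite E. replace (RInt (g x) a' a + RInt (g x) a b + RInt (g x) b b' - RInt (g x) a b) with
       (RInt (g x) a' a + RInt (g x) b b') by ring.
     assert (H1 : Rabs (RInt (g x) a' a) < eps / 2).
     { eapply Rle_lt_trans. apply RInt_g_small; lra. apply Rabs_def1; lra. }
     assert (Db : D / b < eps / 2).
     { apply Rmult_lt_reg_r with b. lra. unfold Rdiv. rewrite Rmult_assoc, Rinv_l by lra.
       assert (2 * D / eps * eps = 2 * D) by (field; lra). nra. }
     assert (Db' : D / b' < eps / 2).
     { apply Rmult_lt_reg_r with b'. lra. unfold Rdiv. rewrite Rmult_assoc, Rinv_l by lra.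
       assert (2 * D / eps * eps = 2 * D) by (field; lra). nra. }
     assert (0 < D / b) by (apply Rdiv_lt_0_compat; lra). assert (0 < D / b') by (apply Rdiv_lt_0_compat; lra).
     assert (H2 : Rabs (RInt (g x) b b') < eps / 2).
     { destruct (Rle_or_lt b b').
       - destruct (RInt_g_tail x D b b' HD ltac:(lra)). rewrite Rabs_pos_eq; lra.
       - rewrite <- opp_RInt_swap by (apply ex_RInt_g; lra). change (Rabs (- RInt (g x) b' b) < eps / 2).
         rewrite Rabs_Ropp. destruct (RInt_g_tail x D b' b HD ltac:(lra)). rewrite Rabs_pos_eq; lra. }
     eapply Rle_lt_trans. apply Rabs_triang. lra. }
 destruct Hc as [l Hl].
 assert (His : is_RInt_gen (g x) (at_right 0) (Rbar_locally p_infty) l).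
 { apply (filterlimi_lim_ext_loc (fun ab => RInt (g x) (fst ab) (snd ab))); auto.
   apply Filter_prod with (fun a => 0 < a) (fun b => 0 < b). apply at_right_pos. apply pinf_gt.
   intros a b Ha Hb. simpl. apply (@RInt_correct R_CompleteNormedModule). apply ex_RInt_g; auto. }
 assert (Hg : Gamma x = l).
 { rewrite Gamma_g. apply is_RInt_gen_unique; auto. }
 rewrite Hg; auto. Qed.

Lemma lim_ge (f : R * R -> R) l c : filterlim f F2 (locally l) -> F2 (fun u => c <= f u) -> c <= l.
Proof. intros Hl Hc. destruct (Rle_or_lt c l) as [H|H]; auto. exfalso.
 assert (He : 0 < c - l) by lra.
 pose proof (proj1 (filterlim_locally f l) Hl (mkposreal _ He)) as Hb.
 destruct (@Hierarchy.filter_ex _ F2 F2_proper _ (filter_and _ _ Hc Hb)) as [u [H1 H2]].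
 change (Rabs (f u - l) < c - l) in H2. apply Rabs_def2 in H2. lra. Qed.

Lemma Gamma_pos x : 1 <= x -> 0 < Gamma x.
Proof. intros Hx. destruct (Gamma_lim x Hx) as [Hl _].
 assert (H12 : 0 < RInt (g x) 1 2).
 { apply RInt_gt_0. lra. intros; apply g_pos; lra. intros; apply g_cont; lra. }
 eapply Rlt_le_trans. apply H12. apply (lim_ge _ _ _ Hl).
 apply Filter_prod with (fun a => 0 < a /\ a < 1) (fun b => 2 < b).
 apply filter_and. apply at_right_pos. apply at_right_lt; lra. apply pinf_gt.
 intros a b Ha Hb. simpl.
 rewrite <- (RInt_Chasles (g x) a 2 b), <- (RInt_Chasles (g x) a 1 2); try apply ex_RInt_g; try lra.
 assert (0 <= RInt (g x) a 1) by (apply RInt_ge_0; [lra|apply ex_RInt_g; lra|intros; apply Rlt_le, g_pos; lra]).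
 assert (0 <= RInt (g x) 2 b) by (apply RInt_ge_0; [lra|apply ex_RInt_g; lra|intros; apply Rlt_le, g_pos; lra]).
 change (RInt (g x) 1 2 <= RInt (g x) a 1 + RInt (g x) 1 2 + RInt (g x) 2 b). lra. Qed.

Lemma Rpower_le_self t y : 1 <= y -> 0 < t <= 1 -> Rpower t y <= t.
Proof. intros Hy Ht. replace y with (1 + (y - 1)) by ring. rewrite Rpower_plus, Rpower_1 by lra.
 assert (Rpower t (y - 1) <= 1).
 { unfold Rpower. apply Rle_trans with (exp 0); [apply exp_le'|rewrite exp_0; lra].
   assert (ln t <= 0) by (rewrite <- ln_1; apply ln_le'; lra).
   assert (0 <= (y - 1) * - ln t) by (apply Rmult_le_pos; lra). lra. }
 assert (0 < Rpower t (y - 1)) by (unfold Rpower; apply exp_pos). nra. Qed.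

Lemma Gamma_rec x : 1 <= x -> Gamma (x + 1) = x * Gamma x.
Proof. intros Hx. destruct (Gamma_lim x Hx) as [_ HG].
 set (h := fun t => - (Rpower t x * exp (- t))).
 set (dh := fun t => - (x * Rpower t (x - 1) * exp (- t) - Rpower t x * exp (- t))).
 assert (Hdh : forall t, 0 < t -> is_derive h t (dh t)).
 { intros t Ht. unfold h, dh. apply (is_derive_opp (fun t => Rpower t x * exp (- t))). apply pe_derive; auto. }
 assert (HD : forall t, 0 < t -> Derive h t = dh t). { intros; apply is_derive_unique; auto. }
 assert (Hcd : forall t, 0 < t -> continuous dh t).
 { intros t Ht. apply (ex_derive_continuous dh). eexists.
   apply (is_derive_ext (fun t => (- x) * (Rpower t (x - 1) * exp (- t)) + Rpower t x * exp (- t))).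
   intros u. unfold dh. cbn. ring.
   apply (is_derive_plus (fun t => (- x) * (Rpower t (x - 1) * exp (- t))) (fun t => Rpower t x * exp (- t))).
   apply is_derive_scal. apply pe_derive; auto. apply pe_derive; auto. }
 assert (Hp : forall a b, 0 < a -> 0 < b -> forall t, Rmin a b <= t <= Rmax a b -> 0 < t).
 { intros a b Ha Hb t Ht. assert (0 < Rmin a b) by (apply Rmin_glb_lt; auto). lra. }
 assert (HI : is_RInt_gen (Derive h) (at_right 0) (Rbar_locally p_infty) (0 - 0)).
 { apply is_RInt_gen_Derive.
   - apply Filter_prod with (fun a => 0 < a) (fun b => 0 < b). apply at_right_pos. apply pinf_gt.
     intros a b Ha Hb t Ht. eexists. apply Hdh. exact (Hp a b Ha Hb t Ht).
   - apply Filter_prod with (fun a => 0 < a) (fun b => 0 < b). apply at_right_pos. apply pinf_gt.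
     intros a b Ha Hb t Ht. assert (0 < t) by exact (Hp a b Ha Hb t Ht).
     apply (continuous_ext_loc (Derive h) dh). 2: apply Hcd; auto.
     exists (mkposreal t H). intros y Hy. change (Rabs (y - t) < t) in Hy. rewrite HD; auto.
     apply Rabs_def2 in Hy. lra.
   - apply filterlim_locally. intros eps. pose proof (cond_pos eps).
     eapply filter_imp. 2: apply (filter_and _ _ at_right_pos (at_right_lt (Rmin 1 eps) ltac:(apply Rmin_glb_lt; lra))).
     intros t [Ht1 Ht2]. apply ball_R. unfold h. rewrite Rminus_0_r, Rabs_Ropp.
     assert (t <= 1) by (pose proof (Rmin_l 1 eps); lra). assert (t < eps) by (pose proof (Rmin_r 1 eps); lra).
     pose proof (pe_pos x t Ht1). rewrite Rabs_pos_eq by lra.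
     pose proof (Rpower_le_self t x Hx ltac:(lra)). assert (exp (- t) <= 1) by (rewrite <- exp_0; apply exp_le'; lra).
     assert (0 < Rpower t x) by (unfold Rpower; apply exp_pos). nra.
   - destruct (pe_bound x ltac:(lra)) as (D & HD0 & HDb).
     apply filterlim_locally. intros eps. pose proof (cond_pos eps).
     eapply filter_imp. 2: apply (pinf_gt (Rmax 1 (D / eps))).
     intros t Ht. apply ball_R. unfold h. rewrite Rminus_0_r, Rabs_Ropp.
     pose proof (Rmax_l 1 (D / eps)). pose proof (Rmax_r 1 (D / eps)).
     pose proof (pe_pos x t ltac:(lra)). rewrite Rabs_pos_eq by lra.
     eapply Rle_lt_trans. apply HDb; lra.
     apply Rmult_lt_reg_r with (t ^ 2). apply pow_lt; lra. unfold Rdiv. rewrite Rmult_assoc, Rinv_l by (apply pow_nonzero; lra).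
     assert (D / eps * eps = D) by (field; lra). assert (eps * t > D) by nra. assert (eps * t * t >= eps * t) by nra. simpl. nra. }
 assert (HI2 := is_RInt_gen_plus _ _ _ _ HI (is_RInt_gen_scal _ x _ HG)).
 rewrite Gamma_g. apply is_RInt_gen_unique.
 apply (is_RInt_gen_ext (fun y => plus (Derive h y) (scal x (g x y)))).
 2:{ replace (x * Gamma x) with (plus (0 - 0) (scal x (Gamma x))). auto.
     unfold plus, scal; simpl. unfold mult; simpl. ring. }
 apply Filter_prod with (fun a => 0 < a) (fun b => 0 < b). apply at_right_pos. apply pinf_gt.
 intros a b Ha Hb t Ht. simpl in Ht. assert (0 < t).
 { assert (0 < Rmin a b) by (apply Rmin_glb_lt; auto). lra. }
 rewrite HD by auto. unfold dh, g, plus, scal; simpl. unfold mult; simpl.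
 replace (x + 1 - 1) with x by ring. ring. Qed.

Lemma Gamma_CS x : 1 <= x -> Gamma (x + 1/2) ^ 2 <= Gamma x * Gamma (x + 1).
Proof. intros Hx. destruct (Gamma_lim x Hx) as [_ H0].
 destruct (Gamma_lim (x + 1/2) ltac:(lra)) as [_ H1]. destruct (Gamma_lim (x + 1) ltac:(lra)) as [_ H2].
 assert (Hq : forall s, 0 <= s ^ 2 * Gamma x + 2 * s * Gamma (x + 1/2) + Gamma (x + 1)).
 { intros s. set (k := fun t => s ^ 2 * g x t + 2 * s * g (x + 1/2) t + g (x + 1) t).
   assert (Hk : is_RInt_gen k (at_right 0) (Rbar_locally p_infty) (s ^ 2 * Gamma x + 2 * s * Gamma (x + 1/2) + Gamma (x + 1))).
   { pose proof (is_RInt_gen_plus _ _ _ _ (is_RInt_gen_plus _ _ _ _ (is_RInt_gen_scal _ (s ^ 2) _ H0) (is_RInt_gen_scal _ (2 * s) _ H1)) H2) as HH.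
     apply (is_RInt_gen_ext _ k) in HH. exact HH.
     apply Filter_prod with (fun a => 0 < a) (fun b => 0 < b). apply at_right_pos. apply pinf_gt.
     intros a b _ _ t _. reflexivity. }
   assert (Hkpos : forall t, 0 < t -> 0 <= k t).
   { intros t Ht. unfold k, g. set (P := Rpower t ((x - 1) / 2)). set (Q := Rpower t (x / 2)).
     replace (x - 1) with ((x - 1) / 2 + (x - 1) / 2) by field.
     replace (x + 1/2 - 1) with ((x - 1) / 2 + x / 2) by field.
     replace (x + 1 - 1) with (x / 2 + x / 2) by field. rewrite !Rpower_plus. fold P Q.
     pose proof (exp_pos (- t)). replace (s ^ 2 * (P * P * exp (- t)) + 2 * s * (P * Q * exp (- t)) + Q * Q * exp (- t))
       with (exp (- t) * (s * P + Q) ^ 2) by ring. apply Rmult_le_pos. lra. apply pow2_ge_0. }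
   assert (Hn := @RInt_gen_norm R_CompleteNormedModule _ _ (at_right_proper_filter 0) (Rbar_locally_filter p_infty) k k (s ^ 2 * Gamma x + 2 * s * Gamma (x + 1 / 2) + Gamma (x + 1)) (s ^ 2 * Gamma x + 2 * s * Gamma (x + 1 / 2) + Gamma (x + 1))).
   assert (Hle := Hn ltac:(apply Filter_prod with (fun a => a < 1) (fun b => 1 < b);
      [apply at_right_lt; lra|apply pinf_gt|intros; simpl; lra])).
   specialize (Hle ltac:(apply Filter_prod with (fun a => 0 < a) (fun b => 0 < b);
      [apply at_right_pos|apply pinf_gt|intros a b Ha Hb t Ht; simpl in Ht;
       change (Rabs (k t) <= k t); rewrite Rabs_pos_eq; [lra|apply Hkpos; lra]]) Hk Hk).
   change (Rabs (s ^ 2 * Gamma x + 2 * s * Gamma (x + 1/2) + Gamma (x + 1)) <= s ^ 2 * Gamma x + 2 * s * Gamma (x + 1/2) + Gamma (x + 1)) in Hle.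
   pose proof (Rabs_pos (s ^ 2 * Gamma x + 2 * s * Gamma (x + 1/2) + Gamma (x + 1))). lra. }
 pose proof (Gamma_pos x Hx). specialize (Hq (- Gamma (x + 1/2) / Gamma x)).
 replace ((- Gamma (x + 1 / 2) / Gamma x) ^ 2 * Gamma x + 2 * (- Gamma (x + 1 / 2) / Gamma x) * Gamma (x + 1 / 2) + Gamma (x + 1))
   with ((Gamma x * Gamma (x + 1) - Gamma (x + 1/2) ^ 2) / Gamma x) in Hq by (field; lra).
 assert (0 <= Gamma x * Gamma (x + 1) - Gamma (x + 1/2) ^ 2).
 { apply Rmult_le_reg_r with (/ Gamma x). apply Rinv_0_lt_compat; lra. rewrite Rmult_0_l. exact Hq. }
 lra. Qed.

Definition Rat y := Gamma y * Gamma (y + 1) / Gamma (y + 1/2) ^ 2.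
Definition fO n := ln (Omega n ^ 2 / (Omega (n - 1) * Omega (n + 1))).

Lemma fO_eq n : (1 <= n)%nat -> fO n = ln (Rat ((INR n + 1) / 2)).
Proof. intros Hn. unfold fO, Omega, Rat. f_equal.
 rewrite minus_INR by lia. rewrite plus_INR. simpl (INR 1).
 set (y := (INR n + 1) / 2).
 replace (INR n / 2 + 1) with (y + 1/2) by (unfold y; field).
 replace ((INR n - 1) / 2 + 1) with y by (unfold y; field).
 replace ((INR n + 1) / 2 + 1) with (y + 1) by (unfold y; field).
 assert (Hy : 1 <= y). { unfold y. assert (1 <= INR n) by (apply (le_INR 1); lia). lra. }
 pose proof (Gamma_pos y Hy). pose proof (Gamma_pos (y + 1/2) ltac:(lra)). pose proof (Gamma_pos (y + 1) ltac:(lra)).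
 assert (HP : Rpower PI ((INR n - 1) / 2) * Rpower PI y = Rpower PI (INR n / 2) ^ 2).
 { rewrite <- Rpower_plus. simpl. rewrite Rmult_1_r, <- Rpower_plus. f_equal. unfold y. field. }
 assert (0 < Rpower PI (INR n / 2)) by (unfold Rpower; apply exp_pos).
 assert (0 < Rpower PI ((INR n - 1) / 2)) by (unfold Rpower; apply exp_pos).
 assert (0 < Rpower PI y) by (unfold Rpower; apply exp_pos).
 unfold Rdiv at 1 2. rewrite Rpow_mult_distr, <- HP. field. repeat split; lra. Qed.

Lemma fO_nonneg n : (1 <= n)%nat -> 0 <= fO n.
Proof. intros Hn. rewrite fO_eq by auto. set (y := (INR n + 1) / 2).
 assert (Hy : 1 <= y). { unfold y. assert (1 <= INR n) by (apply (le_INR 1); lia). lra. }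
 pose proof (Gamma_CS y Hy). pose proof (Gamma_pos (y + 1/2) ltac:(lra)).
 rewrite <- ln_1. apply ln_le'. lra. unfold Rat. apply Rmult_le_reg_r with (Gamma (y + 1/2) ^ 2).
 apply pow_lt; lra. unfold Rdiv. rewrite Rmult_assoc, Rinv_l by (apply pow_nonzero; lra). lra. Qed.

Lemma fO_step n : (1 <= n)%nat -> fO n + fO (S n) = ln (INR n + 2) - ln (INR n + 1).
Proof. intros Hn. rewrite !fO_eq by lia. rewrite S_INR. set (y := (INR n + 1) / 2).
 replace ((INR n + 1 + 1) / 2) with (y + 1/2) by (unfold y; field).
 assert (Hy : 1 <= y). { unfold y. assert (1 <= INR n) by (apply (le_INR 1); lia). lra. }
 pose proof (Gamma_pos y Hy). pose proof (Gamma_pos (y + 1/2) ltac:(lra)).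
 assert (R1 : Gamma (y + 1) = y * Gamma y) by (apply Gamma_rec; lra).
 assert (R2 : Gamma (y + 1/2 + 1) = (y + 1/2) * Gamma (y + 1/2)) by (apply Gamma_rec; lra).
 assert (R3 : Gamma (y + 1/2 + 1/2) = Gamma (y + 1)) by (f_equal; field).
 unfold Rat. rewrite R2, R3, R1.
 pose proof (pos_INR n). rewrite <- ln_mult. rewrite <- ln_div by lra. f_equal. transitivity ((y + 1/2) / y). field. repeat split; lra. unfold y. field. lra.
 apply Rdiv_lt_0_compat. apply Rmult_lt_0_compat; [lra|]. apply Rmult_lt_0_compat; lra. apply pow_lt; lra.
 apply Rdiv_lt_0_compat. apply Rmult_lt_0_compat; [lra|]. apply Rmult_lt_0_compat; lra. apply pow_lt; nra. Qed.

Lemma sm_tele m (u : nat -> R) : sm m (fun i => u i - u (S i)) = u O - u m.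
Proof. induction m; simpl; [ring|]. rewrite IHm. ring. Qed.

Lemma inv_pow_bound n i K : (2 <= n)%nat ->
  / INR (n + i) ^ S (S K) <= / INR n ^ K * (/ (INR (n + i) - 1) - / INR (n + i)).
Proof. intros Hn. assert (Hk : INR n <= INR (n + i)) by (apply le_INR; lia).
 assert (H2 : 2 <= INR n) by (apply (le_INR 2); lia). set (k := INR (n + i)) in *.
 replace (/ k ^ S (S K)) with (/ k ^ K * / (k * k)) by (simpl; field; split; [apply pow_nonzero|]; lra).
 apply Rmult_le_compat. apply Rlt_le, Rinv_0_lt_compat, pow_lt; lra. apply Rlt_le, Rinv_0_lt_compat; nra.
 apply Rinv_le_contravar. apply pow_lt; lra. apply pow_incr; lra.
 replace (/ (k - 1) - / k) with (/ (k * (k - 1))) by (field; lra).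
 apply Rinv_le_contravar; nra. Qed.

Lemma alt_bound (e : nat -> R) A C K M : (2 <= M)%nat ->
  (forall n, (1 <= n)%nat -> Rabs (e n) <= A / INR n) ->
  (forall n, (M <= n)%nat -> Rabs (e n + e (S n)) <= C / INR n ^ S (S K)) ->
  forall n, (M <= n)%nat -> Rabs (e n) <= 2 * C / INR n ^ S K.
Proof. intros HM HA HC n Hn.
 assert (Hn2 : 2 <= INR n) by (apply (le_INR 2); lia).
 assert (HC0 : 0 <= C).
 { specialize (HC n Hn). pose proof (Rabs_pos (e n + e (S n))).
   assert (0 < / INR n ^ S (S K)) by (apply Rinv_0_lt_compat, pow_lt; lra).
   destruct (Rle_or_lt 0 C); auto. assert (C / INR n ^ S (S K) < 0). unfold Rdiv. nra. lra. }
 assert (Hm : forall m, Rabs (e n) <= sm m (fun i => Rabs (e (n + i)%nat + e (S (n + i)))) + Rabs (e (n + m)%nat)).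
 { induction m. simpl. rewrite Nat.add_0_r. lra. rewrite sm_S.
   replace (n + S m)%nat with (S (n + m)) by lia.
   assert (Rabs (e (n + m)%nat) <= Rabs (e (n + m)%nat + e (S (n + m))) + Rabs (e (S (n + m)))).
   { replace (e (n + m)%nat) with ((e (n + m)%nat + e (S (n + m))) + - e (S (n + m))) at 1 by ring.
     eapply Rle_trans. apply Rabs_triang. rewrite Rabs_Ropp. lra. }
   lra. }
 assert (Hs : forall m, sm m (fun i => Rabs (e (n + i)%nat + e (S (n + i)))) <= 2 * C / INR n ^ S K).
 { intros m. eapply Rle_trans. apply (sm_le _ _ (fun i => C * (/ INR n ^ K * (/ (INR (n + i) - 1) - / INR (n + i))))).
   intros i _. eapply Rle_trans. apply HC. lia. unfold Rdiv. apply Rmult_le_compat_l; auto. apply inv_pow_bound; lia.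
   rewrite sm_scal, sm_scal.
   rewrite (sm_ext m _ (fun i => (fun j => / (INR (n + j) - 1)) i - (fun j => / (INR (n + j) - 1)) (S i))).
   rewrite sm_tele. rewrite Nat.add_0_r.
   assert (0 <= / (INR (n + m) - 1)). { assert (INR n <= INR (n + m)) by (apply le_INR; lia). apply Rlt_le, Rinv_0_lt_compat; lra. }
   assert (/ (INR n - 1) <= 2 / INR n). { apply Rmult_le_reg_r with ((INR n - 1) * INR n). nra. field_simplify; lra. }
   assert (0 < / INR n ^ K) by (apply Rinv_0_lt_compat, pow_lt; lra).
   replace (2 * C / INR n ^ S K) with (C * (/ INR n ^ K * (2 / INR n))) by (simpl; field; split; [apply pow_nonzero|]; lra).
   apply Rmult_le_compat_l; auto. apply Rmult_le_compat_l; lra.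
   intros i _. replace (n + S i)%nat with (S (n + i)) by lia. rewrite S_INR. f_equal. f_equal. ring. }
 destruct (Rle_or_lt (Rabs (e n)) (2 * C / INR n ^ S K)) as [H|H]; auto. exfalso.
 set (d := Rabs (e n) - 2 * C / INR n ^ S K).
 assert (Hd : 0 < d) by (unfold d; lra).
 destruct (archimed_cor1 (d / (Rabs A + 1))) as (m & Hm1 & Hm2).
 { apply Rdiv_lt_0_compat; auto. pose proof (Rabs_pos A); lra. }
 specialize (Hm m). specialize (Hs m). specialize (HA (n + m)%nat ltac:(lia)).
 assert (HA' : A / INR (n + m) < d).
 { assert (INR m <= INR (n + m)) by (apply le_INR; lia). assert (0 < INR m) by (apply lt_0_INR; lia).
   assert (A / INR (n + m) <= Rabs A / INR m).
   { unfold Rdiv. apply Rle_trans with (Rabs A * / INR (n + m)). apply Rmult_le_compat_r. apply Rlt_le, Rinv_0_lt_compat; lra.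
     apply RRle_abs. apply Rmult_le_compat_l. apply Rabs_pos. apply Rinv_le_contravar; lra. }
   assert (Rabs A / INR m <= Rabs A * (d / (Rabs A + 1))).
   { unfold Rdiv at 1. apply Rmult_le_compat_l. apply Rabs_pos. lra. }
   assert (Rabs A * (d / (Rabs A + 1)) < d).
   { pose proof (Rabs_pos A). apply Rmult_lt_reg_r with (Rabs A + 1). lra.
     replace (Rabs A * (d / (Rabs A + 1)) * (Rabs A + 1)) with (Rabs A * d) by (field; lra). nra. }
   lra. }
 unfold d in HA'. lra. Qed.

Lemma T_bound N n : (1 <= n)%nat ->
  Rabs (sum_range 1 N (fun j => lambda j / INR n ^ j)) <= sm N (fun i => Rabs (lambda (S i))) / INR n.
Proof. intros Hn. assert (H1 : 1 <= INR n) by (apply (le_INR 1); lia).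
 rewrite T_sm. eapply Rle_trans. apply sm_abs. unfold Rdiv. rewrite Rmult_comm, <- sm_scal.
 apply sm_le. intros i _. unfold Rdiv. rewrite Rabs_mult, (Rmult_comm (/ INR n)). apply Rmult_le_compat_l. apply Rabs_pos.
 rewrite Rabs_pos_eq by (apply Rlt_le, Rinv_0_lt_compat, pow_lt; lra).
 apply Rinv_le_contravar. lra. rewrite <- (pow_1 (INR n)) at 1. apply Rle_pow; auto; lia. Qed.

Theorem theorem13 :
  forall N : nat, exists (K : R) (M : nat), forall n : nat, (M <= n)%nat ->
    Rabs (ln (Omega n ^ 2 / (Omega (n - 1) * Omega (n + 1)))
          - sum_range 1 N (fun j => lambda j / INR n ^ j))
    <= K / INR n ^ (N + 1).
Proof. intros N. destruct (shift_bound (S N)) as (C & M1 & HM1 & HC).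
 set (T := fun n => sum_range 1 (S N) (fun j => lambda j / INR n ^ j)).
 set (e := fun n => fO n - T n).
 set (L := sm (S N) (fun i => Rabs (lambda (S i)))).
 assert (HL : 0 <= L) by (apply sm_nonneg; intros; apply Rabs_pos).
 assert (HA : forall n, (1 <= n)%nat -> Rabs (e n) <= (1 + L) / INR n).
 { intros n Hn. assert (H1 : 1 <= INR n) by (apply (le_INR 1); lia). unfold e.
   pose proof (fO_nonneg n Hn). pose proof (fO_nonneg (S n) ltac:(lia)). pose proof (fO_step n Hn).
   assert (Hl : ln (INR n + 2) - ln (INR n + 1) <= / INR n).
   { rewrite <- ln_div by lra. eapply Rle_trans. apply ln_le_sub1. apply Rdiv_lt_0_compat; lra.
     replace ((INR n + 2) / (INR n + 1) - 1) with (/ (INR n + 1)) by (field; lra).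
     apply Rinv_le_contravar; lra. }
   pose proof (T_bound (S N) n Hn). fold L in H3.
   eapply Rle_trans. apply Rabs_triang. rewrite Rabs_Ropp, Rabs_pos_eq by lra. unfold T.
   replace ((1 + L) / INR n) with (/ INR n + L / INR n) by (field; lra). lra. }
 assert (HE : forall n, (Nat.max M1 2 <= n)%nat -> Rabs (e n + e (S n)) <= C / INR n ^ S (S N)).
 { intros n Hn. specialize (HC n ltac:(lia)). unfold e, T.
   replace (fO n - sum_range 1 (S N) (fun j => lambda j / INR n ^ j) + (fO (S n) - sum_range 1 (S N) (fun j => lambda j / INR (S n) ^ j)))
     with (- (sum_range 1 (S N) (fun j => lambda j / INR n ^ j) + sum_range 1 (S N) (fun j => lambda j / INR (S n) ^ j) -
           (ln (INR n + 2) - ln (INR n + 1)))) by (rewrite <- fO_step by lia; ring).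
   rewrite Rabs_Ropp. auto. }
 pose proof (alt_bound e (1 + L) C N (Nat.max M1 2) ltac:(lia) HA HE) as Hb.
 exists (2 * C + Rabs (lambda (S N))), (Nat.max M1 2). intros n Hn.
 specialize (Hb n Hn). assert (H2 : 2 <= INR n) by (apply (le_INR 2); lia).
 fold (fO n). rewrite Nat.add_1_r.
 assert (ET : T n = sum_range 1 N (fun j => lambda j / INR n ^ j) + lambda (S N) / INR n ^ S N).
 { unfold T. rewrite !T_sm. rewrite sm_S. reflexivity. }
 replace (fO n - sum_range 1 N (fun j => lambda j / INR n ^ j)) with (e n + lambda (S N) / INR n ^ S N)
   by (unfold e; rewrite ET; ring).
 eapply Rle_trans. apply Rabs_triang. unfold Rdiv. rewrite Rabs_mult.
 rewrite (Rabs_pos_eq (/ INR n ^ S N)) by (apply Rlt_le, Rinv_0_lt_compat, pow_lt; lra).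
 unfold Rdiv in Hb. lra. Qed.
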